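(* Let $X$ be a quasi-Banach function space over $\mathbf{R}^d$. Then the following are equivalent: (i) $X\in A$; (ii) $T_Q:X\to X$ is bounded uniformly over all cubes $Q$; (iii) $T_Q:X\to X_{\mathrm{weak}}$ is bounded uniformly over all cubes $Q$. Moreover, in this case \[[X]_A=\sup_Q\|T_Q\|_{X\to X}=\sup_Q\|T_Q\|_{X\to X_{\mathrm{weak}}}.\]
   Context: Cubes are axis-parallel cubes in $\mathbf{R}^d$. A quasi-Banach function space over $\mathbf{R}^d$ is a complete quasi-normed space $X\subseteq L^0(\mathbf{R}^d)$ with the ideal property (if $f\in X$, $|g|\le|f|$ then $g\in X$, $\|g\|_X\le\|f\|_X$) and the saturation property (every set of positive measure contains a subset $F$ of positive measure with $\mathbf{1}_F\in X$). Köthe dual: $\|g\|_{X'}=\sup_{\|f\|_X=1}\int|fg|$. $X_{\mathrm{weak}}$: $f$ with $\mathbf{1}_{\{|f|>\lambda\}}\in X$ for all $\lambda>0$ and $\|f\|_{X_{\mathrm{weak}}}=\sup_\lambda\lambda\|\mathbf{1}_{\{|f|>\lambda\}}\|_X<\infty$. $T_Qf=\big(\frac1{|Q|}\int_Q|f|\big)\mathbf{1}_Q$. $X\in A$: $\mathbf{1}_Q\in X$ and $\mathbf{1}_Q\in X'$ for all cubes and $[X]_A=\sup_Q|Q|^{-1}\|\mathbf{1}_Q\|_X\|\mathbf{1}_Q\|_{X'}<\infty$. *)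

(* Defs.v *)
From HB Require Import structures.
From mathcomp Require Import all_boot all_order all_algebra.
From mathcomp Require Import all_classical all_reals all_analysis.
Set Implicit Arguments. Unset Strict Implicit. Unset Printing Implicit Defensive.
Import Order.TTheory GRing.Theory Num.Theory.
Local Open Scope classical_set_scope.
Local Open Scope ring_scope.
Local Open Scope ereal_scope.

Section defs.
Context {R : realType} {d : nat}.
Local Notation T := (d.-tuple R).
Variable mu : {measure set T -> \bar R}.

(* mu is Lebesgue measure on (the Borel sets of) R^d: boxes get their volume *)
Definition lebesgue_boxes : Prop :=
  forall a b : T, (forall i, tnth a i <= tnth b i)%R ->
    mu [set x : T | forall i, (tnth a i <= tnth x i <= tnth b i)%R]
    = (\prod_(i < d) (tnth b i - tnth a i))%:E.

Definition cube (a : T) (l : R) : set T :=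
  [set x : T | forall i, (tnth a i <= tnth x i <= tnth a i + l)%R].
Definition is_cube (Q : set T) : Prop :=
  exists (a : T) (l : R), (0 < l)%R /\ Q = cube a l.

(* A quasi-Banach function space X is encoded by its quasi-norm rho,
   extended by +oo outside X: X = {f measurable | rho f < +oo}. *)
Variable rho : (T -> R) -> \bar R.

Definition inX (f : T -> R) : Prop := measurable_fun setT f /\ rho f < +oo.

Definition is_qBFS : Prop :=
  (forall f : T -> R, 0 <= rho f) /\
      (forall f, inX f -> (rho f = 0 <-> {ae mu, forall x, f x = 0%R})) /\
      (forall f (c : R), inX f -> rho (fun x => c * f x)%R = (`|c|)%:E * rho f) /\
      (exists K : R, (1 <= K)%R /\ forall f g : T -> R, inX f -> inX g ->
          rho (fun x => f x + g x)%R <= K%:E * (rho f + rho g)) /\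
      (forall u : nat -> T -> R, (forall n, inX (u n)) ->
         (forall e : R, (0 < e)%R -> exists N, forall m n, (N <= m)%N -> (N <= n)%N ->
            rho (fun x => u n x - u m x)%R < e%:E) ->
         exists f : T -> R, inX f /\ forall e : R, (0 < e)%R -> exists N, forall n, (N <= n)%N ->
            rho (fun x => u n x - f x)%R < e%:E) /\
      (forall f g : T -> R, inX f -> measurable_fun setT g ->
         {ae mu, forall x, `|g x| <= `|f x|}%R -> rho g <= rho f) /\
      (forall E : set T, measurable E -> 0 < mu E ->
         exists F : set T, [/\ measurable F, F `<=` E, 0 < mu F & rho (\1_F : T -> R) < +oo]).

Definition kothe_norm (g : T -> R) : \bar R :=
  ereal_sup [set \int[mu]_x (`|f x * g x|)%:E | f in [set f | inX f /\ rho f = 1]].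
Definition inX' (g : T -> R) : Prop := measurable_fun setT g /\ kothe_norm g < +oo.

(* weak quasi-norm (+oo outside X_weak) *)
Definition weak_norm (f : T -> R) : \bar R :=
  ereal_sup [set lam%:E * rho (\1_[set x | lam < `|f x|]%R : T -> R)
            | lam in [set lam : R | (0 < lam)%R]].

Definition avg_op (Q : set T) (f : T -> R) : T -> R :=
  fun x => (fine (\int[mu]_(y in Q) (`|f y|)%:E) / fine (mu Q) * \1_Q x)%R.

Definition avg_bdd (nY : (T -> R) -> \bar R) (Q : set T) (C : R) : Prop :=
  forall f, inX f ->
    \int[mu]_(y in Q) (`|f y|)%:E < +oo /\ nY (avg_op Q f) <= C%:E * rho f.

Definition avg_opnorm (nY : (T -> R) -> \bar R) (Q : set T) : \bar R :=
  ereal_inf [set C%:E | C in [set C : R | (0 <= C)%R /\ avg_bdd nY Q C]].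

Definition avg_unif_bdd (nY : (T -> R) -> \bar R) : Prop :=
  exists C : R, forall Q, is_cube Q -> avg_bdd nY Q C.

Definition sup_avg_opnorm (nY : (T -> R) -> \bar R) : \bar R :=
  ereal_sup [set avg_opnorm nY Q | Q in is_cube].

Definition A_const : \bar R :=
  ereal_sup [set ((fine (mu Q))^-1)%:E * rho (\1_Q : T -> R) * kothe_norm (\1_Q : T -> R)
            | Q in is_cube].

Definition in_A : Prop :=
  (forall Q, is_cube Q -> inX (\1_Q : T -> R) /\ inX' (\1_Q : T -> R)) /\ A_const < +oo.

End defs.

(* Main.v *)
From HB Require Import structures.
From mathcomp Require Import all_boot all_order all_algebra.
From mathcomp Require Import all_classical all_reals all_analysis.
From mathcomp Require Import measurable_realfun ring lra.
Require Import Defs.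
Import Order.TTheory GRing.Theory Num.Theory.
Local Open Scope classical_set_scope.
Local Open Scope ring_scope.
Local Open Scope ereal_scope.

Section S.
Context {R : realType} {d : nat}.
Local Notation T := (d.-tuple R).
Variable mu : {measure set T -> \bar R}.

Lemma cube_meas (a : T) (l : R) : measurable (cube a l).
Proof.
have -> : cube a l = \bigcap_(i in [set: 'I_d])
    ((fun x : T => tnth x i) @^-1` `[tnth a i, (tnth a i + l)%R]%classic).
  apply/seteqP; split => x /=.
    by move=> h i _; rewrite /= in_itv /=; exact: h.
  by move=> h i; have := h i I; rewrite /= in_itv.
apply: fin_bigcap_measurable; first exact: finite_finset.
move=> i _; rewrite -[X in measurable X]setTI.
by apply: measurable_tnth => //; exact: measurable_itv.
Qed.

Lemma cube_mu (a : T) (l : R) : lebesgue_boxes mu -> (0 < l)%R ->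
  mu (cube a l) = (l ^+ d)%:E.
Proof.
move=> Hl l0.
pose b : T := [tuple (tnth a i + l)%R | i < d].
have := Hl a b.
rewrite /cube.
have ab : forall i, (tnth a i <= tnth b i)%R.
  by move=> i; rewrite tnth_mktuple lerDl ltW.
move=> /(_ ab).
under eq_bigr do rewrite tnth_mktuple addrC addKr.
rewrite prodr_const card_ord => <-.
congr (mu _); apply/seteqP; split => x /= h i; by have := h i; rewrite tnth_mktuple.
Qed.
Variable rho : (T -> R) -> \bar R.
Hypothesis HX : is_qBFS mu rho.

Lemma rho_ge0 f : 0 <= rho f.
Proof. by case: HX. Qed.

Lemma rho_ae f : inX rho f -> (rho f = 0 <-> {ae mu, forall x, f x = 0%R}).
Proof. by case: HX => _ [h _]; exact: h. Qed.

Lemma rho_hom f c : inX rho f -> rho (fun x => c * f x)%R = (`|c|)%:E * rho f.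
Proof. by case: HX => _ [_ [h _]]; exact: h. Qed.

Lemma rho_sat {E} : measurable E -> 0 < mu E ->
  exists F : set T, [/\ measurable F, F `<=` E, 0 < mu F & rho (\1_F : T -> R) < +oo].
Proof. by case: HX => _ [_ [_ [_ [_ [_ h]]]]]; exact: h. Qed.

Lemma ind_mfun {Q : set T} : measurable Q -> measurable_fun setT (\1_Q : T -> R).
Proof. move=> mQ; exact: measurable_indic. Qed.

Lemma scale_inX f c : inX rho f -> inX rho (fun x => c * f x)%R.
Proof.
move=> [mf rf]; split; first exact: (measurable_funM (measurable_cst c) mf).
rewrite rho_hom //; by apply: lte_mul_pinfty.
Qed.

Lemma ind_pos {Q : set T} : measurable Q -> 0 < mu Q -> inX rho (\1_Q : T -> R) ->
  0 < rho (\1_Q : T -> R).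
Proof.
move=> mQ muQ iQ; rewrite lt_neqAle rho_ge0 andbT; apply/eqP => /esym.
move/(rho_ae _ iQ) => [N [mN N0 sub]].
have : mu Q <= mu N.
  apply: le_measure; rewrite ?inE //.
  move=> x Qx; apply: sub => /=; rewrite indicE mem_set //; apply/eqP; exact: oner_neq0.
by rewrite N0 leNgt muQ.
Qed.
Lemma mfun_absprod (f g : T -> R) : measurable_fun setT f -> measurable_fun setT g ->
  measurable_fun setT (fun x => (`|f x * g x|)%:E : \bar R).
Proof.
move=> mf mg; apply/measurable_EFinP.
Local Open Scope ring_scope.
have -> : (fun x => `|f x * g x|) = (@Num.Def.normr _ R) \o (f \* g) by [].
apply: measurableT_comp; first exact: normr_measurable.
exact: measurable_funM.
Qed.
Local Open Scope ereal_scope.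

Lemma int_ind (Q : set T) (f : T -> R) : measurable Q ->
  \int[mu]_x (`|f x * (\1_Q : T -> R) x|)%:E = \int[mu]_(x in Q) (`|f x|)%:E.
Proof.
move=> mQ; rewrite [RHS]integral_mkcond; apply: eq_integral => x _.
rewrite patchE indicE; case: (x \in Q) => /=; by rewrite ?mulr1 ?mulr0 ?normr0.
Qed.

Lemma fin_of {x : \bar R} : 0 <= x -> x < +oo -> x = (fine x)%:E.
Proof. by move=> x0 xoo; rewrite fineK // ge0_fin_numE. Qed.

Lemma kothe_bound f g : inX rho f -> measurable_fun setT g ->
  \int[mu]_x (`|f x * g x|)%:E <= rho f * kothe_norm mu rho g.
Proof.
move=> [mf rfoo] mg.
have rf0 := rho_ge0 f.
have [r0|rpos] := eqVneq (rho f) 0.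
  rewrite r0 mul0e.
  have /(rho_ae _ (conj mf rfoo)) hae := r0.
  rewrite (@ae_eq_integral _ _ _ mu setT (cst 0) _) //.
  - by rewrite integral0.
  - exact: mfun_absprod.
  - apply: filterS hae => x /= fx0 _; by rewrite fx0 mul0r normr0.
have rE := fin_of rf0 rfoo.
set r := fine (rho f) in rE.
have r0 : (0 < r)%R by rewrite -lte_fin -rE lt_neqAle eq_sym rpos rf0.
pose h := (fun x => r^-1 * f x)%R.
have ih : inX rho h := scale_inX f r^-1 (conj mf rfoo).
have rh : rho h = 1.
  rewrite /h rho_hom // rE -EFinM gtr0_norm ?invr_gt0 // mulVf //; exact: lt0r_neq0.
have le1 : \int[mu]_x (`|h x * g x|)%:E <= kothe_norm mu rho g.
  by apply: ereal_sup_ubound; exists h.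
have eqh : \int[mu]_x (`|h x * g x|)%:E = (r^-1)%:E * \int[mu]_x (`|f x * g x|)%:E.
  rewrite -ge0_integralZl //; last by rewrite lee_fin invr_ge0 ltW.
  - apply: eq_integral => x _; rewrite /h -mulrA normrM gtr0_norm ?invr_gt0 //.
  - exact: mfun_absprod.
have -> : \int[mu]_x (`|f x * g x|)%:E = r%:E * \int[mu]_x (`|h x * g x|)%:E.
  by rewrite eqh muleA -EFinM divff ?mul1e //; exact: lt0r_neq0.
by rewrite rE; apply: lee_wpmul2l => //; rewrite lee_fin ltW.
Qed.
Hypothesis Hleb : lebesgue_boxes mu.

Lemma cubeP {Q} : is_cube Q ->
  [/\ measurable Q, (0 < fine (mu Q))%R & mu Q = (fine (mu Q))%:E].
Proof.
move=> [a [l [l0 ->]]]; rewrite cube_mu //=; split => //.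
- exact: cube_meas.
- exact: exprn_gt0.
Qed.


Lemma weak_ind Q c : measurable Q -> inX rho (\1_Q : T -> R) -> (0 <= c)%R ->
  weak_norm rho (fun x => c * (\1_Q : T -> R) x)%R = c%:E * rho (\1_Q : T -> R).
Proof.
move=> mQ iQ c0.
have rQ0 := rho_ge0 (\1_Q : T -> R).
have rQE := fin_of rQ0 iQ.2.
set rQ := fine (rho (\1_Q : T -> R)) in rQE.
have rQ0' : (0 <= rQ)%R by rewrite -lee_fin -rQE.
have r0 : rho (\1_set0 : T -> R) = 0.
  have -> : (\1_set0 : T -> R) = (fun x => 0 * (\1_Q : T -> R) x)%R.
    by apply/funext => x; rewrite indic0 mul0r.
  by rewrite rho_hom // normr0 mul0e.
have setE lam : (0 < lam)%R -> [set x | lam < `|c * (\1_Q : T -> R) x|]%R =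
    if (lam < c)%R then Q else set0.
  move=> lam0; apply/seteqP; split => x /=; rewrite indicE;
    case: ifPn => lc; case: (boolP (x \in Q)) => xQ /=; rewrite ?mulr1 ?mulr0 ?normr0 ?ger0_norm //.
  all: try by rewrite inE in xQ.
  all: try by rewrite ltNge (ltW lam0).
  - by move=> h; rewrite h in lc.
  - by move/mem_set; rewrite (negPf xQ).
have elt lam : (0 < lam)%R -> lam%:E * rho (\1_[set x | lam < `|c * (\1_Q : T -> R) x|]%R : T -> R)
    = if (lam < c)%R then lam%:E * rho (\1_Q : T -> R) else 0.
  by move=> lam0; rewrite setE //; case: ifPn => //; rewrite r0 mule0.
rewrite /weak_norm; apply/eqP; rewrite eq_le; apply/andP; split.
  apply: ub_ereal_sup => _ [lam /= lam0 <-]; rewrite elt //.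
  case: ifPn => lc; last by rewrite rQE -EFinM lee_fin mulr_ge0.
  by apply: lee_wpmul2r => //; rewrite lee_fin ltW.
set M := ereal_sup _.
have M0 : 0 <= M.
  apply: ereal_sup_ge; exists (1%:E * rho (\1_[set x | 1 < `|c * (\1_Q : T -> R) x|]%R : T -> R)).
    by exists 1%R => //; rewrite /= ltr01.
  by rewrite mul1e rho_ge0.
have Mge lam : (0 < lam)%R -> (lam < c)%R -> lam%:E * rho (\1_Q : T -> R) <= M.
  move=> lam0 lc; apply: ereal_sup_ubound; exists lam => //; by rewrite elt // lc.
case: M M0 Mge => [m| |] //= m0 Mge; last by rewrite leey.
rewrite rQE -EFinM lee_fin; apply/unstable.ler_ltP => z zlt.
have [z0|z0] := lerP z 0%R; first by rewrite (le_trans z0) // -lee_fin.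
have rQp : (0 < rQ)%R.
  rewrite lt_neqAle rQ0' andbT; apply/eqP => rq0; move: zlt; rewrite -rq0 mulr0.
  by rewrite ltNge (ltW z0).
have := Mge (z / rQ)%R; rewrite rQE -EFinM lee_fin mulfVK ?lt0r_neq0 //; apply.
  by rewrite divr_gt0.
by rewrite ltr_pdivrMr.
Qed.
Lemma mu_fin {F Q : set T} : is_cube Q -> measurable F -> F `<=` Q ->
  mu F = (fine (mu F))%:E.
Proof.
move=> cQ mF FQ; have [mQ _ mQE] := cubeP cQ.
have h : mu F <= mu Q by apply: le_measure; rewrite ?inE.
apply: fin_of => //; apply: (le_lt_trans h); by rewrite mQE ltry.
Qed.

Lemma bdd_to_inX {Q C nY} : is_cube Q -> (nY = rho \/ nY = weak_norm rho) ->
  avg_bdd mu rho nY Q C -> inX rho (\1_Q : T -> R).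
Proof.
move=> cQ hY bdd.
have [mQ mQ0 mQE] := cubeP cQ.
have [F [mF FQ muF0 rF]] := rho_sat mQ (ltac:(by rewrite mQE lte_fin)).
have iF : inX rho (\1_F : T -> R) := conj (ind_mfun mF) rF.
have muFE := mu_fin cQ mF FQ.
have cF0 : (0 < fine (mu F))%R by rewrite -lte_fin -muFE.
have eI : \int[mu]_(y in Q) (`|(\1_F : T -> R) y|)%:E = mu F.
  transitivity (\int[mu]_(y in Q) ((\1_F : T -> R) y)%:E).
    by apply: eq_integral => y _; rewrite ger0_norm // indicE ler0n.
  by rewrite integral_indic // setIidl.
set c := (fine (mu F) / fine (mu Q))%R.
have c0 : (0 < c)%R by rewrite divr_gt0.
have avE : avg_op mu Q (\1_F : T -> R) = (fun x => c * (\1_Q : T -> R) x)%R.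
  by rewrite /avg_op eI.
have [_ hb] := bdd _ iF; rewrite avE in hb.
have hfin : nY (fun x => c * (\1_Q : T -> R) x)%R < +oo.
  apply: (le_lt_trans hb); rewrite (fin_of (rho_ge0 _) rF) -EFinM; exact: ltry.
case: hY => hY; rewrite hY in hfin.
  have ic : inX rho (fun x => c * (\1_Q : T -> R) x)%R.
    split => //; exact: (measurable_funM (measurable_cst c) (ind_mfun mQ)).
  have -> : (\1_Q : T -> R) = (fun x => c^-1 * (c * (\1_Q : T -> R) x))%R.
    by apply/funext => x; rewrite mulKf // lt0r_neq0.
  exact: scale_inX.
split; first exact: ind_mfun.
have setE : [set x | c / 2 < `|c * (\1_Q : T -> R) x|]%R = Q.
  apply/seteqP; split => x /=; rewrite indicE.
    case: (boolP (x \in Q)) => xQ; first by move=> _; exact: set_mem.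
    by rewrite mulr0 normr0 ltNge divr_ge0 // ltW.
  move=> Qx; rewrite mem_set // mulr1 ger0_norm ?ltW // ltr_pdivrMr // ltr_pMr //.
  by rewrite ltr1n.
have : (c / 2)%:E * rho (\1_Q : T -> R) < +oo.
  apply: le_lt_trans hfin; apply: ereal_sup_ubound; exists (c / 2)%R.
    by rewrite /= divr_gt0.
  by rewrite setE.
have := rho_ge0 (\1_Q : T -> R).
case: (rho (\1_Q : T -> R)) => [r| |] //= _.
  by move=> _; exact: ltry.
by rewrite gt0_muley // lte_fin divr_gt0.
Qed.
Lemma fin_ex {x : \bar R} : 0 <= x -> x < +oo -> exists2 a, (0 <= a)%R & x = a%:E.
Proof.
move=> x0 xoo; exists (fine x); last exact: fin_of.
by rewrite fine_ge0.
Qed.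

Lemma int_ge0 (Q : set T) (f : T -> R) : 0 <= \int[mu]_(y in Q) (`|f y|)%:E.
Proof. by apply: integral_ge0 => x _; rewrite lee_fin. Qed.

Lemma avg_c_ge0 (Q : set T) (f : T -> R) :
  (0 <= fine (\int[mu]_(y in Q) (`|f y|)%:E) / fine (mu Q))%R.
Proof. by rewrite divr_ge0 // fine_ge0 // int_ge0. Qed.

Lemma rho_weak_eq Q f : measurable Q -> inX rho (\1_Q : T -> R) ->
  rho (avg_op mu Q f) = weak_norm rho (avg_op mu Q f).
Proof.
move=> mQ iQ; rewrite /avg_op weak_ind // ?avg_c_ge0 // rho_hom // ger0_norm //.
exact: avg_c_ge0.
Qed.

Lemma bdd_rho_weak {Q C} : measurable Q -> inX rho (\1_Q : T -> R) ->
  (avg_bdd mu rho rho Q C <-> avg_bdd mu rho (weak_norm rho) Q C).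
Proof.
move=> mQ iQ; split => h f iff; have [h1 h2] := h f iff; split => //.
  by rewrite -rho_weak_eq.
by rewrite rho_weak_eq.
Qed.

Lemma rhoQ_pos {Q} : is_cube Q -> inX rho (\1_Q : T -> R) ->
  exists2 rQ, (0 < rQ)%R & rho (\1_Q : T -> R) = rQ%:E.
Proof.
move=> cQ iQ; have [mQ mQ0 mQE] := cubeP cQ.
have rp : 0 < rho (\1_Q : T -> R) by apply: ind_pos => //; rewrite mQE lte_fin.
have [r r0 rE] := fin_ex (rho_ge0 _) iQ.2.
by exists r => //; rewrite -lte_fin -rE.
Qed.

Lemma kothe_ge0 g Q : is_cube Q -> inX rho (\1_Q : T -> R) -> 0 <= kothe_norm mu rho g.
Proof.
move=> cQ iQ; have [rQ rQ0 rQE] := rhoQ_pos cQ iQ.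
pose h := (fun x => rQ^-1 * (\1_Q : T -> R) x)%R.
have ih : inX rho h := scale_inX _ rQ^-1 iQ.
have rh : rho h = 1.
  rewrite /h rho_hom // rQE -EFinM gtr0_norm ?invr_gt0 // mulVf //; exact: lt0r_neq0.
apply: ereal_sup_ge; exists (\int[mu]_x (`|h x * g x|)%:E).
  by exists h.
by apply: integral_ge0 => x _; rewrite lee_fin.
Qed.

Lemma kothe_le {Q C} : is_cube Q -> inX rho (\1_Q : T -> R) -> avg_bdd mu rho rho Q C ->
  kothe_norm mu rho (\1_Q : T -> R) <= (C * fine (mu Q) / fine (rho (\1_Q : T -> R)))%:E.
Proof.
move=> cQ iQ bdd; have [mQ mQ0 mQE] := cubeP cQ.
have [rQ rQ0 rQE] := rhoQ_pos cQ iQ.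
apply: ub_ereal_sup => _ [f [iff rf1] <-]; rewrite int_ind //.
have [Ifin hb] := bdd f iff.
have [a a0 aE] := fin_ex (int_ge0 Q f) Ifin.
move: hb; rewrite /avg_op aE /= rho_hom // rf1 rQE mule1 -EFinM !lee_fin ger0_norm; last first.
  by rewrite divr_ge0 // ltW.
move=> hb; rewrite /= ler_pdivlMr //.
have -> : (a * rQ = (a / fine (mu Q) * rQ) * fine (mu Q))%R.
  by field; rewrite lt0r_neq0.
by apply: ler_wpM2r => //; exact: ltW.
Qed.
Definition AQ (Q : set T) := ((fine (mu Q))^-1)%:E * rho (\1_Q : T -> R) *
  kothe_norm mu rho (\1_Q : T -> R).

Lemma AQ_le {Q C} : is_cube Q -> inX rho (\1_Q : T -> R) -> avg_bdd mu rho rho Q C ->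
  AQ Q <= C%:E.
Proof.
move=> cQ iQ bdd; have [mQ mQ0 mQE] := cubeP cQ.
have [rQ rQ0 rQE] := rhoQ_pos cQ iQ.
have := kothe_le cQ iQ bdd; rewrite rQE /= => hk.
rewrite /AQ rQE -EFinM.
have h0 : 0 <= ((fine (mu Q))^-1 * rQ)%:E by rewrite lee_fin mulr_ge0 // ?invr_ge0 ltW.
apply: le_trans (lee_wpmul2l h0 hk) _.
rewrite -EFinM lee_fin le_eqVlt; apply/orP; left; apply/eqP.
by field; rewrite !lt0r_neq0.
Qed.

Lemma AQ_fin {Q} : is_cube Q -> inX rho (\1_Q : T -> R) ->
  kothe_norm mu rho (\1_Q : T -> R) < +oo ->
  exists2 A, (0 <= A)%R & AQ Q = A%:E.
Proof.
move=> cQ iQ kfin; have [mQ mQ0 mQE] := cubeP cQ.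
have [rQ rQ0 rQE] := rhoQ_pos cQ iQ.
have [k k0 kE] := fin_ex (kothe_ge0 _ _ cQ iQ) kfin.
exists ((fine (mu Q))^-1 * rQ * k)%R.
  by rewrite !mulr_ge0 // ?invr_ge0 ltW.
by rewrite /AQ rQE kE -!EFinM.
Qed.

Lemma bdd_AQ {Q A} : is_cube Q -> inX rho (\1_Q : T -> R) ->
  kothe_norm mu rho (\1_Q : T -> R) < +oo -> AQ Q = A%:E ->
  avg_bdd mu rho rho Q A.
Proof.
move=> cQ iQ kfin AE f iff; have [mQ mQ0 mQE] := cubeP cQ.
have [rQ rQ0 rQE] := rhoQ_pos cQ iQ.
have [k k0 kE] := fin_ex (kothe_ge0 _ _ cQ iQ) kfin.
have [r r0 rE] := fin_ex (rho_ge0 f) iff.2.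
have hI : \int[mu]_(y in Q) (`|f y|)%:E <= (r * k)%:E.
  rewrite -int_ind //; apply: le_trans (kothe_bound f _ iff (ind_mfun mQ)) _.
  by rewrite rE kE -EFinM.
have Ifin : \int[mu]_(y in Q) (`|f y|)%:E < +oo by apply: le_lt_trans hI _; exact: ltry.
split => //.
have [a a0 aE] := fin_ex (int_ge0 Q f) Ifin.
move: hI AE; rewrite /avg_op /AQ aE rho_hom // rQE kE rE -!EFinM /= !lee_fin => hI AE.
have -> : A = ((fine (mu Q))^-1 * rQ * k)%R by case: AE.
rewrite ger0_norm ?divr_ge0 ?(ltW mQ0) //.
have -> : (a / fine (mu Q) * rQ = ((fine (mu Q))^-1 * rQ) * a)%R by ring.
have -> : ((fine (mu Q))^-1 * rQ * k * r = ((fine (mu Q))^-1 * rQ) * (r * k))%R by ring.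
by apply: ler_wpM2l => //; rewrite mulr_ge0 // ?invr_ge0 ltW.
Qed.

Lemma opnorm_AQ Q : is_cube Q -> inX rho (\1_Q : T -> R) ->
  kothe_norm mu rho (\1_Q : T -> R) < +oo -> avg_opnorm mu rho rho Q = AQ Q.
Proof.
move=> cQ iQ kfin; have [A A0 AE] := AQ_fin cQ iQ kfin.
apply/eqP; rewrite eq_le; apply/andP; split.
  apply: ge_ereal_inf; exists A%:E; last by rewrite AE.
  by exists A => //; split => //; exact: bdd_AQ.
apply/ereal_infP => _ [C [C0 hC] <-]; exact: AQ_le.
Qed.
Lemma bdd_mono {nY Q} {C C' : R} : (C <= C')%R -> avg_bdd mu rho nY Q C -> avg_bdd mu rho nY Q C'.
Proof.
move=> CC h f iff; have [h1 h2] := h f iff; split => //.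
by apply: le_trans h2 _; apply: lee_wpmul2r; [exact: rho_ge0 | rewrite lee_fin].
Qed.

Lemma main :
  [/\ in_A mu rho <-> avg_unif_bdd mu rho rho,
      avg_unif_bdd mu rho rho <-> avg_unif_bdd mu rho (weak_norm rho) &
      in_A mu rho ->
        A_const mu rho = sup_avg_opnorm mu rho rho /\
        A_const mu rho = sup_avg_opnorm mu rho (weak_norm rho)].
Proof.
have iA_bdd : in_A mu rho -> avg_unif_bdd mu rho rho.
  move=> [hQ Afin]; exists (fine (A_const mu rho)) => Q cQ.
  have [iQ [_ kfin]] := hQ Q cQ.
  have [A A0 AE] := AQ_fin cQ iQ kfin.
  apply: bdd_mono (bdd_AQ cQ iQ kfin AE).
  have AleA : A%:E <= A_const mu rho.
    by rewrite -AE; apply: ereal_sup_ubound; exists Q.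
  rewrite -lee_fin fineK // ge0_fin_numE // (le_trans _ AleA) // lee_fin.
have bdd_iA : avg_unif_bdd mu rho rho -> in_A mu rho.
  move=> [C hC].
  have iQ Q : is_cube Q -> inX rho (\1_Q : T -> R).
    by move=> cQ; exact: (bdd_to_inX cQ (or_introl erefl) (hC Q cQ)).
  split.
    move=> Q cQ; split; first exact: iQ.
    split; first by have [mQ _ _] := cubeP cQ; exact: ind_mfun.
    by apply: le_lt_trans (kothe_le cQ (iQ Q cQ) (hC Q cQ)) _; exact: ltry.
  apply: (@le_lt_trans _ _ C%:E); last exact: ltry.
  apply: ub_ereal_sup => _ [Q cQ <-]; exact: (AQ_le cQ (iQ Q cQ) (hC Q cQ)).
have bw : avg_unif_bdd mu rho rho <-> avg_unif_bdd mu rho (weak_norm rho).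
  split => -[C hC]; exists C => Q cQ; have [mQ _ _] := cubeP cQ.
    have iQ := bdd_to_inX cQ (or_introl erefl) (hC Q cQ).
    exact: (proj1 (bdd_rho_weak mQ iQ) (hC Q cQ)).
  have iQ := bdd_to_inX cQ (or_intror erefl) (hC Q cQ).
  exact: (proj2 (bdd_rho_weak mQ iQ) (hC Q cQ)).
split; [by split | exact: bw | ].
move=> [hQ Afin].
have e1 Q : is_cube Q -> avg_opnorm mu rho rho Q = AQ Q.
  by move=> cQ; have [iQ [_ kfin]] := hQ Q cQ; exact: opnorm_AQ.
have e2 Q : is_cube Q -> avg_opnorm mu rho (weak_norm rho) Q = AQ Q.
  move=> cQ; rewrite -e1 //; have [iQ _] := hQ Q cQ; have [mQ _ _] := cubeP cQ.
  rewrite /avg_opnorm.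
  have -> : [set C : R | (0 <= C)%R /\ avg_bdd mu rho (weak_norm rho) Q C] =
            [set C : R | (0 <= C)%R /\ avg_bdd mu rho rho Q C] => //.
  apply/seteqP; split => C [C0 h]; split => //.
    exact: (proj2 (bdd_rho_weak mQ iQ) h).
  exact: (proj1 (bdd_rho_weak mQ iQ) h).
split; rewrite /sup_avg_opnorm /A_const; congr ereal_sup;
  apply/seteqP; split => _ [Q cQ <-]; exists Q => //; rewrite ?e1 ?e2 //.
Qed.
End S.

Theorem proposition3p3 (R : realType) (d : nat)
    (mu : {measure set (d.-tuple R) -> \bar R})
    (rho : (d.-tuple R -> R) -> \bar R) :
  lebesgue_boxes mu -> is_qBFS mu rho ->
  [/\ in_A mu rho <-> avg_unif_bdd mu rho rho,
      avg_unif_bdd mu rho rho <-> avg_unif_bdd mu rho (weak_norm rho) &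
      in_A mu rho ->
        A_const mu rho = sup_avg_opnorm mu rho rho /\
        A_const mu rho = sup_avg_opnorm mu rho (weak_norm rho)].
Proof. by move=> Hl Hq; exact: main. Qed.
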